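(* Let $d\ge 2$ and $n\ge1$ be integers, let $\mathcal{S}^*\subseteq\{1,\dots,d\}$, let $a_{1:n}\in(\{0,1\}^d)^n$ be arbitrary, and let $x_t:=h_{\mathcal{S}^*}(a_t)$ for $t=1,\dots,n$. Then the cumulative log-loss of the predictor $\zeta_d$ satisfies $\mathcal{L}_n(\zeta_d)=-\log_2\prod_{t=1}^n\zeta_d(x_t\mid x_{<t};a_{1:t})\le 2d^2$.
   Context: For $\mathcal{S}\subseteq\{1,\dots,d\}$ and $a\in\{0,1\}^d$, $h_{\mathcal{S}}(a)=\bigwedge_{i\in\mathcal{S}}a^i$ (equal to $1$ if $\mathcal{S}=\emptyset$), where $a^i$ is the $i$-th component of $a$. The predictor $\zeta_d$ is defined as follows, with $\alpha:=2^{-d/2^d}$. At time $t$, let $\mathcal{A}_t:=\{a_\tau:\tau<t,\ x_\tau=0\}$ (the set of previously seen negative inputs) and, for $i=1,\dots,d$, let $w_i:=\prod_{\tau<t:\,x_\tau=1}a_\tau^i$ (equal to $1$ if there is no such $\tau$). If $a_t\in\mathcal{A}_t$, then $\zeta_d(0\mid x_{<t};a_{1:t})=1$ and $\zeta_d(1\mid x_{<t};a_{1:t})=0$. Otherwise $$\zeta_d(1\mid x_{<t};a_{1:t})=\prod_{i=1}^d\frac{(1-\alpha)+\alpha w_i a_t^i}{(1-\alpha)+\alpha w_i},\qquad \zeta_d(0\mid x_{<t};a_{1:t})=1-\zeta_d(1\mid x_{<t};a_{1:t}).$$ *)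

(* Defs.v *)
From Stdlib Require Import Reals List Bool Arith.
Import ListNotations.
Open Scope R_scope.

(* A point a in {0,1}^d is a function nat -> bool, read on indices 1..d.
   A sequence a_{1:n} is a function nat -> (nat -> bool), read on 1..n.
   A subset S of {1..d} is a predicate nat -> bool, read on 1..d. *)

Definition Rprod (l : list R) : R := fold_right Rmult 1 l.

Definition bitR (b : bool) : R := if b then 1 else 0.

Definition h (d : nat) (S : nat -> bool) (a : nat -> bool) : bool :=
  forallb (fun i => implb (S i) (a i)) (seq 1 d).

Definition vec_eqb (d : nat) (u v : nat -> bool) : bool :=
  forallb (fun i => Bool.eqb (u i) (v i)) (seq 1 d).

Definition inA (d : nat) (a : nat -> nat -> bool) (x : nat -> bool) (t : nat) : bool :=
  existsb (fun tau => negb (x tau) && vec_eqb d (a tau) (a t)) (seq 1 (t - 1)).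

Definition w (a : nat -> nat -> bool) (x : nat -> bool) (t i : nat) : R :=
  Rprod (map (fun tau => bitR (a tau i)) (filter x (seq 1 (t - 1)))).

Definition alpha (d : nat) : R := Rpower 2 (- INR d / 2 ^ d).

Definition zeta1 (d : nat) (a : nat -> nat -> bool) (x : nat -> bool) (t : nat) : R :=
  if inA d a x t then 0
  else Rprod (map (fun i =>
         ((1 - alpha d) + alpha d * w a x t i * bitR (a t i)) /
         ((1 - alpha d) + alpha d * w a x t i)) (seq 1 d)).

Definition zeta (d : nat) (a : nat -> nat -> bool) (x : nat -> bool) (t : nat) (b : bool) : R :=
  if b then zeta1 d a x t else 1 - zeta1 d a x t.

Definition log2 (y : R) : R := ln y / ln 2.

Definition zeta_prod (d n : nat) (a : nat -> nat -> bool) (x : nat -> bool) : R :=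
  Rprod (map (fun t => zeta d a x t (x t)) (seq 1 n)).

Definition logloss (d n : nat) (a : nat -> nat -> bool) (x : nat -> bool) : R :=
  - log2 (zeta_prod d n a x).

(* Main.v *)
Require Import Defs.
From Stdlib Require Import Reals List Bool Arith Lia Lra.
Import ListNotations.
Open Scope R_scope.

Lemma Rprod_app l1 l2 : Rprod (l1 ++ l2) = Rprod l1 * Rprod l2.
Proof. induction l1; simpl; [ring|rewrite IHl1; ring]. Qed.

Lemma Rprod_bit {A} (f : A -> bool) l :
  Rprod (map (fun t => bitR (f t)) l) = bitR (forallb f l).
Proof.
  induction l; simpl; auto. rewrite IHl. destruct (f a), (forallb f l); simpl; ring.
Qed.

Definition wb (a : nat -> nat -> bool) (x : nat -> bool) (T i : nat) : bool :=
  forallb (fun tau => a tau i) (filter x (seq 1 T)).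

Lemma w_wb a x T i : w a x (S T) i = bitR (wb a x T i).
Proof. unfold w, wb. replace (S T - 1)%nat with T by lia. apply Rprod_bit. Qed.

Lemma Rprod_factor (c : R) (p q : nat -> bool) l : 1 - c <> 0 ->
  Rprod (map (fun i => ((1 - c) + c * bitR (p i) * bitR (q i)) /
         ((1 - c) + c * bitR (p i))) l) =
  (1 - c) ^ length (filter (fun i => p i && negb (q i)) l).
Proof.
  intros Hc. induction l as [|i l IH]; simpl; auto.
  rewrite IH. destruct (p i), (q i); simpl; field; lra.
Qed.

Lemma zeta1_eq d a x T : 1 - alpha d <> 0 -> inA d a x (S T) = false ->
  zeta1 d a x (S T) = (1 - alpha d) ^
    length (filter (fun i => wb a x T i && negb (a (S T) i)) (seq 1 d)).
Proof.
  intros Hc HA. unfold zeta1. rewrite HA.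
  rewrite <- (Rprod_factor (alpha d) (wb a x T) (a (S T))) by auto.
  f_equal. apply map_ext. intros i. rewrite w_wb. reflexivity.
Qed.

Lemma forallb_ext_in {A} (f g : A -> bool) l :
  (forall y, In y l -> f y = g y) -> forallb f l = forallb g l.
Proof.
  induction l; simpl; intros H; auto. rewrite H by auto. rewrite IHl; auto.
Qed.

Lemma vec_eqb_h d Sv u v : vec_eqb d u v = true -> h d Sv u = h d Sv v.
Proof.
  unfold vec_eqb, h. intros H. rewrite forallb_forall in H.
  apply forallb_ext_in. intros i Hi. specialize (H i Hi).
  apply Bool.eqb_prop in H. rewrite H. reflexivity.
Qed.

Lemma pos_not_inA d Sv a x t : (forall t, x t = h d Sv (a t)) -> x t = true ->
  inA d a x t = false.
Proof.
  intros Hx Ht. unfold inA. destruct (existsb _ _) eqn:E; auto.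
  apply existsb_exists in E. destruct E as [tau [_ E]].
  apply andb_prop in E. destruct E as [E1 E2].
  apply vec_eqb_h with (Sv := Sv) in E2. rewrite <- !Hx in E2.
  rewrite E2, Ht in E1. discriminate.
Qed.

Lemma length_filter_split {A} (f g : A -> bool) l :
  length (filter f l) = (length (filter (fun i => f i && g i) l) +
                         length (filter (fun i => f i && negb (g i)) l))%nat.
Proof.
  induction l; simpl; auto. destruct (f a), (g a); simpl; lia.
Qed.

Definition Wc d a x T := length (filter (wb a x T) (seq 1 d)).

Lemma wb_S a x T i :
  wb a x (S T) i = if x (S T) then wb a x T i && a (S T) i else wb a x T i.
Proof.
  unfold wb. rewrite seq_S, filter_app. simpl.
  destruct (x (S T)); simpl; rewrite forallb_app; simpl.
  - destruct (a (S T) i); simpl; ring_simplify; auto; rewrite ?andb_true_r, ?andb_false_r; auto.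
  - rewrite andb_true_r; auto.
Qed.

Lemma neg_k_pos d Sv a x T : (forall t, x t = h d Sv (a t)) -> x (S T) = false ->
  (1 <= length (filter (fun i => wb a x T i && negb (a (S T) i)) (seq 1 d)))%nat.
Proof.
  intros Hx Ht. rewrite Hx in Ht. unfold h in Ht.
  assert (exists i, In i (seq 1 d) /\ Sv i = true /\ a (S T) i = false) as [i [Hi [HS Ha]]].
  { destruct (existsb (fun i => Sv i && negb (a (S T) i)) (seq 1 d)) eqn:E.
    - apply existsb_exists in E. destruct E as [i [Hi E]]. exists i.
      apply andb_prop in E. destruct E. split; auto. split; auto. apply negb_true_iff; auto.
    - exfalso. assert (forallb (fun i => implb (Sv i) (a (S T) i)) (seq 1 d) = true).
      { apply forallb_forall. intros i Hi.
        destruct (Sv i) eqn:HS, (a (S T) i) eqn:Ha; auto.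
        assert (existsb (fun i => Sv i && negb (a (S T) i)) (seq 1 d) = true).
        { apply existsb_exists. exists i. rewrite HS, Ha. auto. }
        congruence. }
      congruence. }
  assert (In i (filter (fun i => wb a x T i && negb (a (S T) i)) (seq 1 d))).
  { apply filter_In. split; auto. rewrite Ha. rewrite andb_true_r.
    unfold wb. apply forallb_forall. intros tau Htau.
    apply filter_In in Htau. destruct Htau as [_ Htau]. rewrite Hx in Htau.
    unfold h in Htau. rewrite forallb_forall in Htau. specialize (Htau i Hi).
    rewrite HS in Htau. exact Htau. }
  destruct (filter _ _); simpl in *; [contradiction| lia].
Qed.

Definition newneg d a x t := negb (x t) && negb (inA d a x t).
Definition Nc d a x T := length (filter (newneg d a x) (seq 1 T)).

Definition Pr d a x T := Rprod (map (fun t => zeta d a x t (x t)) (seq 1 T)).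

Lemma Wc_le d a x T : (Wc d a x T <= d)%nat.
Proof. unfold Wc. rewrite <- (length_seq d 1) at 2. apply filter_length_le. Qed.

Lemma pow_le1 c k : 0 <= c <= 1 -> c ^ k <= 1.
Proof.
  intros H. induction k; simpl; [lra|].
  apply Rle_trans with (c * 1); [apply Rmult_le_compat_l; lra | lra].
Qed.

Lemma invariant d Sv a x T : (forall t, x t = h d Sv (a t)) ->
  0 < alpha d < 1 ->
  (1 - alpha d) ^ (d - Wc d a x T) * alpha d ^ (Nc d a x T) <= Pr d a x T.
Proof.
  intros Hx Ha. assert (Hc : 1 - alpha d <> 0) by lra.
  induction T as [|T IH].
  - unfold Wc, Nc, Pr, wb. simpl.
    replace (length (filter (fun _ => true) (seq 1 d))) with d.
    + rewrite Nat.sub_diag. simpl. lra.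
    + clear. generalize 1%nat. induction d; simpl; auto.
  - unfold Pr in *. rewrite seq_S, map_app, Rprod_app. simpl.
    replace (1 + T)%nat with (S T) by lia.
    assert (HWT := Wc_le d a x T).
    assert (Hpos1 : 0 <= (1 - alpha d) ^ (d - Wc d a x T)) by (apply pow_le; lra).
    assert (Hpos2 : 0 <= alpha d ^ Nc d a x T) by (apply pow_le; lra).
    set (P := Rprod (map (fun t => zeta d a x t (x t)) (seq 1 T))) in *.
    unfold zeta. destruct (x (S T)) eqn:Ht.
    + rewrite (zeta1_eq d a x T Hc (pos_not_inA d Sv a x (S T) Hx Ht)).
      set (k := length _).
      assert (HW : Wc d a x T = (Wc d a x (S T) + k)%nat).
      { unfold Wc, k. rewrite (length_filter_split (wb a x T) (a (S T))).
        f_equal. f_equal. apply filter_ext_in. intros i _. rewrite wb_S, Ht. auto. }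
      assert (HN : Nc d a x (S T) = Nc d a x T).
      { unfold Nc. rewrite seq_S, filter_app. simpl. unfold newneg at 2.
        rewrite Ht. simpl. rewrite app_nil_r. replace (1+T)%nat with (S T) by lia. auto. }
      rewrite HN. replace (d - Wc d a x (S T))%nat with ((d - Wc d a x T) + k)%nat by lia.
      rewrite pow_add. rewrite Rmult_1_r.
      replace ((1 - alpha d) ^ (d - Wc d a x T) * (1 - alpha d) ^ k * alpha d ^ Nc d a x T)
        with (((1 - alpha d) ^ (d - Wc d a x T) * alpha d ^ Nc d a x T) * (1 - alpha d) ^ k) by ring.
      apply Rmult_le_compat_r; auto. apply pow_le; lra.
    + assert (HW : Wc d a x (S T) = Wc d a x T).
      { unfold Wc. f_equal. apply filter_ext_in. intros i _. rewrite wb_S, Ht. auto. }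
      rewrite HW. rewrite Rmult_1_r.
      destruct (inA d a x (S T)) eqn:HA.
      * assert (HN : Nc d a x (S T) = Nc d a x T).
        { unfold Nc. rewrite seq_S, filter_app. simpl. unfold newneg at 2.
          replace (1+T)%nat with (S T) by lia. rewrite Ht, HA. simpl. rewrite app_nil_r. auto. }
        rewrite HN. replace (zeta1 d a x (S T)) with 0 by (unfold zeta1; rewrite HA; auto). lra.
      * assert (HN : Nc d a x (S T) = S (Nc d a x T)).
        { unfold Nc. rewrite seq_S, filter_app. simpl. unfold newneg at 2.
          replace (1+T)%nat with (S T) by lia. rewrite Ht, HA. simpl. rewrite length_app. simpl. lia. }
        rewrite HN. rewrite (zeta1_eq d a x T Hc HA).
        assert (Hk := neg_k_pos d Sv a x T Hx Ht).
        set (k := length _) in *.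
        assert ((1 - alpha d) ^ k <= 1 - alpha d).
        { destruct k; [lia|]. assert (H1 : (1 - alpha d) ^ k <= 1) by (apply pow_le1; lra).
          simpl. nra. }
        simpl.
        replace ((1 - alpha d) ^ (d - Wc d a x T) * (alpha d * alpha d ^ Nc d a x T))
          with (((1 - alpha d) ^ (d - Wc d a x T) * alpha d ^ Nc d a x T) * alpha d) by ring.
        apply Rmult_le_compat; try lra. apply Rmult_le_pos; auto.
Qed.

Definition key d (v : nat -> bool) := map v (seq 1 d).

Lemma key_vec d u v : key d u = key d v -> vec_eqb d u v = true.
Proof.
  unfold key, vec_eqb. generalize 1%nat. induction d; simpl; intros s H; auto.
  injection H as H1 H2. rewrite H1, Bool.eqb_reflx. simpl. apply IHd; auto.
Qed.

Lemma NoDup_snoc {A} (l : list A) y : NoDup l -> ~ In y l -> NoDup (l ++ [y]).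
Proof.
  intros H1 H2. apply NoDup_app; auto. constructor; auto. constructor.
  intros z Hz [Hy|[]]. subst; auto.
Qed.

Lemma keys_nodup d a x T :
  NoDup (map (fun t => key d (a t)) (filter (newneg d a x) (seq 1 T))).
Proof.
  induction T; [simpl; constructor|].
  rewrite seq_S, filter_app, map_app. simpl. replace (1+T)%nat with (S T) by lia.
  destruct (newneg d a x (S T)) eqn:E; simpl; [|rewrite app_nil_r; auto].
  apply NoDup_snoc; auto. intros Hin. apply in_map_iff in Hin.
  destruct Hin as [tau [Hk Htau]]. apply filter_In in Htau. destruct Htau as [Htau Hn].
  unfold newneg in E, Hn. apply andb_prop in E, Hn. destruct E as [_ E]. destruct Hn as [Hn _].
  apply negb_true_iff in E. unfold inA in E.
  assert (existsb (fun tau => negb (x tau) && vec_eqb d (a tau) (a (S T))) (seq 1 (S T - 1)) = true).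
  { apply existsb_exists. exists tau. split.
    - replace (S T - 1)%nat with T by lia. auto.
    - rewrite Hn. simpl. apply key_vec; auto. }
  congruence.
Qed.

Fixpoint allbl (m : nat) : list (list bool) :=
  match m with
  | O => [[]]
  | S m => map (cons true) (allbl m) ++ map (cons false) (allbl m)
  end.

Lemma allbl_len m : length (allbl m) = (2 ^ m)%nat.
Proof. induction m; simpl; auto. rewrite length_app, !length_map. lia. Qed.

Lemma allbl_in m l : length l = m -> In l (allbl m).
Proof.
  revert l; induction m; intros l H; destruct l; simpl in *; try lia; auto.
  apply in_or_app. destruct b; [left|right]; apply in_map; auto.
Qed.

Lemma Nc_le d a x T : (Nc d a x T <= 2 ^ d)%nat.
Proof.
  unfold Nc. rewrite <- (length_map (fun t => key d (a t))), <- allbl_len.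
  apply NoDup_incl_length; [apply keys_nodup|]. intros l Hl.
  apply in_map_iff in Hl. destruct Hl as [t [<- _]]. apply allbl_in.
  unfold key. rewrite length_map, length_seq. auto.
Qed.

Lemma ln_le' x y : 0 < x -> x <= y -> ln x <= ln y.
Proof. intros Hx [H|H]; [left; apply ln_increasing; auto| subst; lra]. Qed.

Lemma ln2_lt1 : ln 2 < 1.
Proof.
  rewrite <- (ln_exp 1). apply ln_increasing; [lra|].
  assert (H := exp_ineq1 1 ltac:(lra)). lra.
Qed.

Lemma pow_dec c m n : 0 <= c <= 1 -> (m <= n)%nat -> c ^ n <= c ^ m.
Proof.
  intros Hc Hmn. replace n with (m + (n - m))%nat by lia. rewrite pow_add.
  assert (0 <= c ^ m) by (apply pow_le; lra).
  assert (c ^ (n - m) <= 1) by (apply pow_le1; lra). nra.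
Qed.

Lemma INR_le_pow d : INR d <= 2 ^ d.
Proof.
  induction d; [simpl; lra|]. rewrite S_INR. simpl.
  assert (1 <= 2 ^ d) by (apply pow_R1_Rle; lra). lra.
Qed.

Lemma alpha_exp d : alpha d = exp (- (INR d / 2 ^ d * ln 2)).
Proof. unfold alpha, Rpower. f_equal. field. apply pow_nonzero. lra. Qed.

Lemma alpha_bounds d : (2 <= d)%nat -> 0 < alpha d < 1 /\
   2 / (2 ^ d) ^ 2 <= 1 - alpha d.
Proof.
  intros Hd. rewrite alpha_exp.
  assert (Hl := ln_lt_2). assert (Hl1 := ln2_lt1).
  assert (Hp : 4 <= 2 ^ d).
  { replace 4 with (2 ^ 2) by lra. apply Rle_pow; lra || lia. }
  assert (HdR : 2 <= INR d) by (replace 2 with (INR 2) by (simpl; lra); apply le_INR; lia).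
  assert (Hy1 := INR_le_pow d).
  set (p := 2 ^ d) in *. set (y := INR d / p).
  assert (Hy0 : 0 < y) by (unfold y; apply Rdiv_lt_0_compat; lra).
  assert (Hy1' : y <= 1) by (unfold y; apply (Rmult_le_reg_r p); [lra|]; unfold Rdiv; rewrite Rmult_assoc, Rinv_l; lra).
  set (z := y * ln 2).
  assert (Hz : 0 < z < 1) by (unfold z; split; nra).
  rewrite exp_Ropp.
  assert (He := exp_ineq1 z ltac:(lra)).
  assert (0 < / exp z < 1).
  { split; [apply Rinv_0_lt_compat; lra|]. rewrite <- Rinv_1. apply Rinv_lt_contravar; lra. }
  split; [lra|].
  assert (1 - / exp z >= z / 2).
  { assert (/ exp z <= / (1 + z)) by (apply Rinv_le_contravar; lra).
    assert (1 - / (1 + z) = z / (1 + z)) by (field; lra).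
    assert (z / (1 + z) >= z / 2).
    { unfold Rdiv. apply Rle_ge. apply Rmult_le_compat_l; [lra|].
      apply Rinv_le_contravar; lra. }
    lra. }
  assert (z / 2 >= y / 4) by (unfold z; nra).
  assert (y / 4 >= 2 / p ^ 2).
  { unfold y. apply Rle_ge. apply (Rmult_le_reg_r (4 * p ^ 2)); [nra|].
    field_simplify; try lra. nra. }
  lra.
Qed.

Theorem theorem4 (d n : nat) (S : nat -> bool) (a : nat -> nat -> bool) :
  (2 <= d)%nat -> (1 <= n)%nat ->
  let x := fun t => h d S (a t) in
  0 < zeta_prod d n a x /\ logloss d n a x <= 2 * INR d ^ 2.
Proof.
  intros Hd _ x.
  assert (Hx : forall t, x t = h d S (a t)) by (intros; reflexivity).
  destruct (alpha_bounds d Hd) as [Ha Hb].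
  assert (Hinv := invariant d S a x n Hx Ha).
  assert (Hc : 0 <= 1 - alpha d <= 1) by lra.
  assert (Hc' : 0 <= alpha d <= 1) by lra.
  assert (H1 : (1 - alpha d) ^ d <= (1 - alpha d) ^ (d - Wc d a x n))
    by (apply pow_dec; auto; lia).
  assert (H2 : alpha d ^ (2 ^ d) <= alpha d ^ (Nc d a x n))
    by (apply pow_dec; auto; apply Nc_le).
  assert (Hq1 : 0 < (1 - alpha d) ^ d) by (apply pow_lt; lra).
  assert (Hq2 : 0 < alpha d ^ (2 ^ d)) by (apply pow_lt; lra).
  assert (HL : (1 - alpha d) ^ d * alpha d ^ (2 ^ d) <= zeta_prod d n a x).
  { apply Rle_trans with (2 := Hinv). apply Rmult_le_compat; auto; lra. }
  assert (HLpos : 0 < (1 - alpha d) ^ d * alpha d ^ (2 ^ d)) by (apply Rmult_lt_0_compat; auto).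
  split; [lra|].
  assert (Hl := ln_lt_2).
  assert (Hln : ln ((1 - alpha d) ^ d * alpha d ^ (2 ^ d)) <= ln (zeta_prod d n a x))
    by (apply ln_le'; auto).
  rewrite ln_mult, !ln_pow in Hln by lra.
  rewrite pow_INR in Hln. replace (INR 2) with 2 in Hln by (simpl; lra).
  assert (Hla : ln (alpha d) = - (INR d / 2 ^ d * ln 2)) by (rewrite alpha_exp, ln_exp; auto).
  rewrite Hla in Hln.
  assert (Hb' : ln (2 / (2 ^ d) ^ 2) <= ln (1 - alpha d)).
  { apply ln_le'; auto. apply Rdiv_lt_0_compat; [lra|]. apply pow_lt, pow_lt; lra. }
  unfold Rdiv in Hb' at 1. rewrite ln_mult, ln_Rinv, !ln_pow in Hb' by
    (try apply Rinv_0_lt_compat; repeat apply pow_lt; lra).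
  assert (HlnP : - (2 * INR d ^ 2 * ln 2) <= ln (zeta_prod d n a x)).
  { assert (Hp : 0 < 2 ^ d) by (apply pow_lt; lra).
    assert (E : 2 ^ d * - (INR d / 2 ^ d * ln 2) = - INR d * ln 2) by (field; lra).
    rewrite E in Hln. simpl in Hb'.
    assert (HdR : 0 <= INR d) by apply pos_INR.
    assert (INR d * (ln 2 - 2 * (INR d * ln 2)) <= INR d * ln (1 - alpha d))
      by (apply Rmult_le_compat_l; lra).
    nra. }
  unfold logloss, log2, Rdiv.
  assert (Hi : 0 < / ln 2) by (apply Rinv_0_lt_compat; lra).
  assert (Hf : ln (zeta_prod d n a x) * / ln 2 >= (- (2 * INR d ^ 2 * ln 2)) * / ln 2)
    by (apply Rle_ge, Rmult_le_compat_r; lra).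
  replace ((- (2 * INR d ^ 2 * ln 2)) * / ln 2) with (- (2 * INR d ^ 2)) in Hf by (field; lra).
  lra.
Qed.
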